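(* Let $(A,\mu,\Delta,\alpha)$ be an infinitesimal Hom-bialgebra and define $x\bullet y=\alpha(y_1)(\alpha(x)y_2)$ (which equals $(y_1\alpha(x))\alpha(y_2)$) for $x,y\in A$. Then $(A,\bullet,\alpha^3)$ is a left Hom-pre-Lie algebra.
   Context: Notation $\mu(a\otimes b)=ab$, $\Delta(a)=a_1\otimes a_2$. An infinitesimal Hom-bialgebra $(A,\mu,\Delta,\alpha)$: $\alpha$ linear with $\alpha(xy)=\alpha(x)\alpha(y)$ and $\alpha(x)(yz)=(xy)\alpha(z)$; $(\alpha\otimes\alpha)\circ\Delta=\Delta\circ\alpha$ and $(\Delta\otimes\alpha)\circ\Delta=(\alpha\otimes\Delta)\circ\Delta$; and $\Delta(ab)=\alpha(a)b_1\otimes\alpha(b_2)+\alpha(a_1)\otimes a_2\alpha(b)$ for all $a,b$. A left Hom-pre-Lie algebra $(A,\cdot,\gamma)$: $\gamma(x\cdot y)=\gamma(x)\cdot\gamma(y)$ and $\gamma(x)\cdot(y\cdot z)-(x\cdot y)\cdot\gamma(z)=\gamma(y)\cdot(x\cdot z)-(y\cdot x)\cdot\gamma(z)$ for all $x,y,z$. *)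

(* Defs.v *)
From HB Require Import structures.
From mathcomp Require Import all_boot all_order all_algebra.
Set Implicit Arguments. Unset Strict Implicit. Unset Printing Implicit Defensive.
Import GRing.Theory.
Local Open Scope ring_scope.

(* Tensor products A (x) A and A (x) A (x) A are modelled by finite formal sums
   (sequences of pairs / triples), two formal sums being identified iff every
   bilinear (resp. trilinear) map into every K-module takes the same value on
   them.  This is exactly the universal-property quotient defining the
   tensor product. *)

Section Defs.
Variables (K : fieldType) (A : lmodType K).

Definition linear_map (f : A -> A) : Prop :=
  forall (k : K) (a b : A), f (k *: a + b) = k *: f a + f b.

Definition bilinear_map (V : lmodType K) (f : A -> A -> V) : Prop :=
  (forall (k : K) (a a' b : A), f (k *: a + a') b = k *: f a b + f a' b) /\
  (forall (k : K) (a b b' : A), f a (k *: b + b') = k *: f a b + f a b').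

Definition trilinear_map (V : lmodType K) (f : A -> A -> A -> V) : Prop :=
  (forall (k : K) (a a' b c : A), f (k *: a + a') b c = k *: f a b c + f a' b c) /\
  (forall (k : K) (a b b' c : A), f a (k *: b + b') c = k *: f a b c + f a b' c) /\
  (forall (k : K) (a b c c' : A), f a b (k *: c + c') = k *: f a b c + f a b c').

Definition teq2 (s t : seq (A * A)) : Prop :=
  forall (V : lmodType K) (f : A -> A -> V), bilinear_map f ->
    \sum_(p <- s) f p.1 p.2 = \sum_(p <- t) f p.1 p.2.

Definition teq3 (s t : seq (A * A * A)) : Prop :=
  forall (V : lmodType K) (f : A -> A -> A -> V), trilinear_map f ->
    \sum_(p <- s) f p.1.1 p.1.2 p.2 = \sum_(p <- t) f p.1.1 p.1.2 p.2.

(* Infinitesimal Hom-bialgebra (A, mu, Delta, alpha);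
   Delta a is a formal-sum representative of Delta(a) = a_1 (x) a_2. *)
Record is_inf_Hom_bialgebra (mu : A -> A -> A) (Delta : A -> seq (A * A))
    (alpha : A -> A) : Prop := {
  ihb_mu_bilinear : bilinear_map mu;
  ihb_alpha_linear : linear_map alpha;
  ihb_Delta_linear : forall (k : K) (a b : A),
     teq2 (Delta (k *: a + b)) ([seq (k *: p.1, p.2) | p <- Delta a] ++ Delta b);
  ihb_alpha_mult : forall x y : A, alpha (mu x y) = mu (alpha x) (alpha y);
  ihb_hom_assoc : forall x y z : A, mu (alpha x) (mu y z) = mu (mu x y) (alpha z);
  ihb_alpha_comult : forall a : A,
     teq2 [seq (alpha p.1, alpha p.2) | p <- Delta a] (Delta (alpha a));
  (* (Delta (x) alpha) o Delta = (alpha (x) Delta) o Delta *)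
  ihb_hom_coassoc : forall a : A,
     teq3 (flatten [seq [seq (c.1, c.2, alpha p.2) | c <- Delta p.1] | p <- Delta a])
          (flatten [seq [seq (alpha p.1, c.1, c.2) | c <- Delta p.2] | p <- Delta a]);
  ihb_compat : forall a b : A,
     teq2 (Delta (mu a b))
          ([seq (mu (alpha a) p.1, alpha p.2) | p <- Delta b] ++
           [seq (alpha p.1, mu p.2 (alpha b)) | p <- Delta a])
}.

Definition hom_bullet (mu : A -> A -> A) (Delta : A -> seq (A * A))
    (alpha : A -> A) (x y : A) : A :=
  \sum_(p <- Delta y) mu (alpha p.1) (mu (alpha x) p.2).

Definition is_left_Hom_preLie (op : A -> A -> A) (gamma : A -> A) : Prop :=
  [/\ bilinear_map op, linear_map gamma,
      (forall x y : A, gamma (op x y) = op (gamma x) (gamma y))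
    & (forall x y z : A,
         op (gamma x) (op y z) - op (op x y) (gamma z)
         = op (gamma y) (op x z) - op (op y x) (gamma z))].

End Defs.

(* Main.v *)
Require Import Defs.
From HB Require Import structures.
From mathcomp Require Import all_boot all_order all_algebra.
Set Implicit Arguments. Unset Strict Implicit. Unset Printing Implicit Defensive.
Import GRing.Theory.
Local Open Scope ring_scope.

Section S.
Variables (K : fieldType) (A : lmodType K)
    (mu : A -> A -> A) (Delta : A -> seq (A * A)) (alpha : A -> A).
Hypothesis H : is_inf_Hom_bialgebra mu Delta alpha.

Local Notation a := alpha.
Local Notation m := mu.

Lemma aL k u v : a (k *: u + v) = k *: a u + a v.
Proof. exact: (ihb_alpha_linear H). Qed.
Lemma mL k u u' v : m (k *: u + u') v = k *: m u v + m u' v.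
Proof. exact: (ihb_mu_bilinear H).1. Qed.
Lemma mR k u v v' : m u (k *: v + v') = k *: m u v + m u v'.
Proof. exact: (ihb_mu_bilinear H).2. Qed.

Lemma lin0 (V : lmodType K) (g : A -> V) :
  (forall k u v, g (k *: u + v) = k *: g u + g v) -> g 0 = 0.
Proof.
move=> hg; have := hg 1 0 0; rewrite !scale1r addr0 => e.
by apply: (addrI (g 0)); rewrite addr0 -e.
Qed.
Lemma linD (V : lmodType K) (g : A -> V) :
  (forall k u v, g (k *: u + v) = k *: g u + g v) -> forall u v, g (u + v) = g u + g v.
Proof. by move=> hg u v; have := hg 1 u v; rewrite !scale1r. Qed.
Lemma linS (V : lmodType K) (g : A -> V) :
  (forall k u v, g (k *: u + v) = k *: g u + g v) ->
  forall (I : Type) (s : seq I) (F : I -> A), g (\sum_(i <- s) F i) = \sum_(i <- s) g (F i).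
Proof.
move=> hg I s F; elim: s => [|x s IH]; first by rewrite !big_nil (lin0 hg).
by rewrite !big_cons (linD hg) IH.
Qed.

Definition S (V : lmodType K) (f : A -> A -> V) (w : A) := \sum_(p <- Delta w) f p.1 p.2.

Lemma S_lin (V : lmodType K) (f : A -> A -> V) : bilinear_map f ->
  forall k u v, S f (k *: u + v) = k *: S f u + S f v.
Proof.
move=> hf k u v; rewrite /S (ihb_Delta_linear H k u v hf) big_cat big_map /=.
congr (_ + _); rewrite scaler_sumr; apply: eq_bigr => p _.
have := hf.1 k p.1 0 p.2; rewrite addr0 => ->.
by rewrite (lin0 (fun k u v => hf.1 k u v p.2)) addr0.
Qed.

Lemma am u v : a (m u v) = m (a u) (a v).
Proof. exact: (ihb_alpha_mult H). Qed.
Lemma has u v w : m (a u) (m v w) = m (m u v) (a w).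
Proof. exact: (ihb_hom_assoc H). Qed.

Ltac bil := split => ? ? ? ? /=; rewrite ?(aL, mL, mR) //.

Lemma S_compat (f : A -> A -> A) : bilinear_map f -> forall u v,
  S f (m u v) = S (fun p1 p2 => f (m (a u) p1) (a p2)) v
              + S (fun p1 p2 => f (a p1) (m p2 (a v))) u.
Proof.
move=> hf u v; rewrite /S (ihb_compat H u v hf) big_cat !big_map //.
Qed.

Lemma S_alpha (f : A -> A -> A) : bilinear_map f -> forall w,
  S f (a w) = S (fun p1 p2 => f (a p1) (a p2)) w.
Proof.
move=> hf w; rewrite /S -(ihb_alpha_comult H w hf) big_map //.
Qed.

Lemma S_coassoc (g : A -> A -> A -> A) : trilinear_map g -> forall w,
  \sum_(p <- Delta w) \sum_(c <- Delta p.1) g c.1 c.2 (a p.2) =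
  \sum_(p <- Delta w) \sum_(c <- Delta p.2) g (a p.1) c.1 c.2.
Proof.
move=> hg w; have := ihb_hom_coassoc H w hg.
by rewrite !big_flatten /= !big_map; under eq_bigr do rewrite big_map; under [RHS]eq_bigr do rewrite big_map.
Qed.

Local Notation bul := (hom_bullet mu Delta alpha).
Local Notation g3 x := (a (a (a x))).

Lemma bulS x y : bul x y = S (fun u v => m (a u) (m (a x) v)) y.
Proof. by []. Qed.

Lemma LHS1 x y z : bul (g3 x) (bul y z) =
  \sum_(q <- Delta z) \sum_(r <- Delta q.2)
     m (a (m (a (a q.1)) (m (a (a y)) r.1))) (m (a (g3 (x))) (a (a r.2)))
+ \sum_(q <- Delta z) \sum_(r <- Delta y)
     m (a (m (a (a q.1)) (a (a r.1)))) (m (a (g3 x)) (a (m (a r.2) (a q.2))))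
+ \sum_(q <- Delta z) \sum_(p <- Delta q.1)
     m (a (a (a p.1))) (m (a (g3 x)) (m (a p.2) (a (m (a y) q.2)))).
Proof.
rewrite bulS {1}/hom_bullet (linS (S_lin _)); last by bil.
rewrite -!big_split /=; apply: eq_bigr => q _.
rewrite S_compat; last by bil.
rewrite S_compat; last by bil.
rewrite S_alpha; last by bil.
rewrite S_alpha; last by bil.
by [].
Qed.

Lemma RHS1 x y z : bul (bul x y) (g3 z) =
  \sum_(q <- Delta z) \sum_(r <- Delta y)
     m (a (g3 q.1)) (m (a (m (a r.1) (m (a x) r.2))) (g3 q.2)).
Proof.
rewrite bulS S_alpha; last by bil.
rewrite S_alpha; last by bil.
rewrite S_alpha; last by bil.
rewrite /S; apply: eq_bigr => q _.
rewrite {1}/hom_bullet (linS aL).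
rewrite (linS (fun k u v => mL k u v _)).
by rewrite (linS (fun k u v => mR k _ u v)).
Qed.

Lemma E2 x q1 q2 r1 r2 :
  m (a (m (a (a q1)) (a (a r1)))) (m (a (g3 x)) (a (m (a r2) (a q2)))) =
  m (a (g3 q1)) (m (a (m (a r1) (m (a x) r2))) (g3 q2)).
Proof.
rewrite !am.
have e1 : m (a (a (a (a x)))) (m (a (a r2)) (a (a q2))) =
          a (m (a (a (a x))) (m (a r2) (a q2))) by rewrite !am.
rewrite e1 -has; congr (m _ _).
rewrite -has; congr (m _ _).
exact: has.
Qed.

Lemma E13 x y q1 r1 r2 :
  m (a (a (a (a q1)))) (m (a (g3 x)) (m (a r1) (m (a (a y)) r2))) =
  m (a (m (a (a q1)) (m (a (a x)) r1))) (m (a (g3 y)) (a (a r2))).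
Proof.
rewrite !am.
have e1 : m (a (a (a (a y)))) (a (a r2)) = a (m (a (a (a y))) (a r2)) by rewrite !am.
rewrite e1 -has; congr (m _ _).
have e2 : m (a (a (a y))) (a r2) = a (m (a (a y)) r2) by rewrite !am.
by rewrite e2 -has.
Qed.

Lemma T31 x y z :
  \sum_(q <- Delta z) \sum_(p <- Delta q.1)
     m (a (a (a p.1))) (m (a (g3 x)) (m (a p.2) (a (m (a y) q.2)))) =
  \sum_(q <- Delta z) \sum_(r <- Delta q.2)
     m (a (m (a (a q.1)) (m (a (a x)) r.1))) (m (a (g3 y)) (a (a r.2))).
Proof.
pose G := fun u v w => m (a (a (a u))) (m (a (g3 x)) (m (a v) (m (a (a y)) w))).
have hG : trilinear_map G.
  by split; [|split] => k u u' v w /=; rewrite /G ?(aL, mL, mR).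
transitivity (\sum_(p <- Delta z) \sum_(c <- Delta p.1) G c.1 c.2 (a p.2)).
  by apply: eq_bigr => q _; apply: eq_bigr => p _; rewrite /G am.
rewrite (S_coassoc hG); apply: eq_bigr => q _; apply: eq_bigr => p _.
exact: E13.
Qed.

Lemma preLie x y z :
  bul (g3 x) (bul y z) - bul (bul x y) (g3 z) =
  bul (g3 y) (bul x z) - bul (bul y x) (g3 z).
Proof.
rewrite !LHS1 !RHS1.
have e : forall u v, \sum_(q <- Delta z) \sum_(r <- Delta v)
     m (a (m (a (a q.1)) (a (a r.1)))) (m (a (g3 u)) (a (m (a r.2) (a q.2))))
   = \sum_(q <- Delta z) \sum_(r <- Delta v)
     m (a (g3 q.1)) (m (a (m (a r.1) (m (a u) r.2))) (g3 q.2)).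
  by move=> u v; apply: eq_bigr => q _; apply: eq_bigr => r _; exact: E2.
rewrite !e !T31.
have ab : forall u v w s : A, u + v + w - v = w + s + u - s.
  by move=> u v w s; rewrite [u + v + w]addrAC addrK [w + s + u]addrAC addrK addrC.
exact: ab.
Qed.

Lemma bul_bil : bilinear_map bul.
Proof.
split => [k u u' v|k u v v'].
  rewrite /hom_bullet scaler_sumr -big_split /=; apply: eq_bigr => p _.
  by rewrite aL mL mR.
by rewrite !bulS (S_lin _); last by bil.
Qed.

Lemma g3_lin : linear_map (fun x => g3 x).
Proof. by move=> k u v /=; rewrite !aL. Qed.

Lemma g3_mult x y : g3 (bul x y) = bul (g3 x) (g3 y).
Proof.
rewrite [RHS]bulS S_alpha; last by bil.
rewrite S_alpha; last by bil.
rewrite S_alpha; last by bil.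
rewrite /hom_bullet !(linS aL) /S; apply: eq_bigr => p _.
by rewrite !am.
Qed.

End S.

Theorem mainTheorem13 (K : fieldType) (A : lmodType K)
    (mu : A -> A -> A) (Delta : A -> seq (A * A)) (alpha : A -> A) :
  is_inf_Hom_bialgebra mu Delta alpha ->
  is_left_Hom_preLie (hom_bullet mu Delta alpha) (fun x => alpha (alpha (alpha x))).
Proof.
move=> H; rewrite /is_left_Hom_preLie; split.
  exact: (bul_bil H).
  exact: (g3_lin H).
  exact: (g3_mult H).
exact: (preLie H).
Qed.
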